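(* Let $D:\mathbb{R}^{n+1}\to\mathbb{R}^n$ be the difference map $D(b)=(b_2-b_1,b_3-b_2,\dots,b_{n+1}-b_n)^t$ and $D^\star:\mathbb{R}^n\to\mathbb{R}^{n+1}$ its transpose, $D^\star(a)=(-a_1,a_1-a_2,\dots,a_{n-1}-a_n,a_n)^t$. On $\mathbb{R}^n$ with the standard inner product define $\|a\|_X=\|D^\star a\|_1$ and $\|a\|_Y=\min\{\|b\|_\infty: b\in\mathbb{R}^{n+1},\ Db=a\}$. Then $\|\cdot\|_X$ and $\|\cdot\|_Y$ are norms dual to each other, and they are tight: every vector $c\in\mathbb{R}^n$ is tight.
   Context: For a norm $\|\cdot\|_X$ with dual norm $\|\cdot\|_Y$ on a euclidean space with $\|v\|_2=\sqrt{\langle v,v\rangle}$, and norms $\|\cdot\|_P,\|\cdot\|_Q$ among $X,Y,2$, a decomposition $c=a+b$ is a $PQ$-decomposition if for every decomposition $c=a'+b'$: $\|a'\|_P>\|a\|_P$, or $\|b'\|_Q>\|b\|_Q$, or $(\|a'\|_P,\|b'\|_Q)=(\|a\|_P,\|b\|_Q)$. A vector $c$ is tight if every $X2$-decomposition of $c$ is an $XY$-decomposition. *)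

(* Defs.v *)
(* Vectors in R^n are row vectors 'rV[R]_n; R is any real closed field
   (needed for Num.sqrt in the euclidean norm). *)
From HB Require Import structures.
From mathcomp Require Import all_boot all_order all_algebra.
Set Implicit Arguments. Unset Strict Implicit. Unset Printing Implicit Defensive.
Import Order.TTheory GRing.Theory Num.Theory.
Local Open Scope ring_scope.

Section Defs.
Variable R : rcfType.

(* Matrix of the difference map D : R^{n+1} -> R^n acting on row vectors:
   (b *m Dmat n) 0 i = b_{i+1} - b_i  (0-indexed). Its transpose gives D^*. *)
Definition Dmat (n : nat) : 'M[R]_(n.+1, n) :=
  \matrix_(j < n.+1, i < n)
    ((j == lift ord0 i)%:R - (j == widen_ord (leqnSn n) i)%:R).

Definition Dop (n : nat) (b : 'rV[R]_n.+1) : 'rV[R]_n := b *m Dmat n.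
Definition Dstar (n : nat) (a : 'rV[R]_n) : 'rV[R]_n.+1 := a *m (Dmat n)^T.

Definition dot (n : nat) (u v : 'rV[R]_n) : R := \sum_(i < n) u 0 i * v 0 i.
Definition norm1 (n : nat) (v : 'rV[R]_n) : R := \sum_(i < n) `|v 0 i|.
Definition norminf (n : nat) (v : 'rV[R]_n) : R := \big[Num.max/0]_(i < n) `|v 0 i|.
Definition norm2 (n : nat) (v : 'rV[R]_n) : R := Num.sqrt (dot v v).

Definition normX (n : nat) (a : 'rV[R]_n) : R := norm1 (Dstar a).

Definition is_normY (n : nat) (a : 'rV[R]_n) (y : R) : Prop :=
  (exists b : 'rV[R]_n.+1, Dop b = a /\ norminf b = y) /\
  (forall b : 'rV[R]_n.+1, Dop b = a -> y <= norminf b).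

Definition is_norm (n : nat) (N : 'rV[R]_n -> R) : Prop :=
  [/\ forall x, N x = 0 -> x = 0,
      forall (k : R) x, N (k *: x) = `|k| * N x &
      forall x y, N (x + y) <= N x + N y].

Definition is_sup (P : R -> Prop) (s : R) : Prop :=
  (forall z, P z -> z <= s) /\ (forall u, (forall z, P z -> z <= u) -> s <= u).

Definition is_dual (n : nat) (NX NY : 'rV[R]_n -> R) : Prop :=
  forall y, is_sup (fun z => exists x, NX x <= 1 /\ z = dot x y) (NY y).

Definition is_decomp (n : nat) (NP NQ : 'rV[R]_n -> R) (c a b : 'rV[R]_n) : Prop :=
  c = a + b /\
  forall a' b', c = a' + b' ->
    NP a < NP a' \/ NQ b < NQ b' \/ (NP a' = NP a /\ NQ b' = NQ b).

Definition tight (n : nat) (NX NY : 'rV[R]_n -> R) (c : 'rV[R]_n) : Prop :=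
  forall a b, is_decomp NX (@norm2 n) c a b -> is_decomp NX NY c a b.

End Defs.

(* Main.v *)
Require Import Defs.
From HB Require Import structures.
From mathcomp Require Import all_boot all_order all_algebra.
From mathcomp Require Import ring lra zify.
Set Implicit Arguments. Unset Strict Implicit. Unset Printing Implicit Defensive.
Import Order.TTheory GRing.Theory Num.Theory.
Local Open Scope ring_scope.


Section Basics.
Variable R : rcfType.

Definition at_ (m : nat) (v : 'rV[R]_m) (k : nat) : R :=
  if insub k is Some i then v 0 i else 0.

Lemma atE m (v : 'rV[R]_m) (i : 'I_m) : at_ v i = v 0 i.
Proof. by rewrite /at_ valK. Qed.

Lemma at_ge m (v : 'rV[R]_m) k : (m <= k)%N -> at_ v k = 0.
Proof. by move=> H; rewrite /at_ insubF // ltnNge H. Qed.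

Lemma sum_at m (v : 'rV[R]_m) k :
  \sum_(i < m) v 0 i * ((i : nat) == k)%:R = at_ v k.
Proof.
case: (ltnP k m) => Hk.
  rewrite (bigD1 (Ordinal Hk)) //= eqxx mulr1 big1 ?addr0; last first.
    move=> i Hi; case: eqP => [E|]; last by rewrite mulr0.
    by move: Hi; rewrite -val_eqE /= E eqxx.
  by rewrite -(atE v (Ordinal Hk)).
rewrite at_ge // big1 // => i _.
by rewrite (_ : (i : nat) == k = false) ?mulr0 //; apply/negbTE; rewrite neq_ltn (leq_trans (ltn_ord i) Hk).
Qed.

Lemma Dop_entry n (b : 'rV[R]_n.+1) (i : 'I_n) :
  (Dop b) 0 i = at_ b i.+1 - at_ b i.
Proof.
rewrite /Dop mxE.
rewrite (eq_bigr (fun j => b 0 j * ((j : nat) == i.+1)%:R - b 0 j * ((j:nat) == i)%:R)).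
  by rewrite sumrB !sum_at.
move=> j _; rewrite mxE mulrBr; congr (_ * _%:R - _ * _%:R).
Qed.

Definition pv (f : nat -> R) (k : nat) : R := if k is k'.+1 then f k' else 0.

Lemma Dstar_entry n (a : 'rV[R]_n) (j : 'I_n.+1) :
  (Dstar a) 0 j = pv (at_ a) j - at_ a j.
Proof.
rewrite /Dstar mxE.
rewrite (eq_bigr (fun i => a 0 i * ((i : nat) == (j:nat).-1)%:R * (0 < j)%:R - a 0 i * ((i:nat) == j)%:R)).
  rewrite sumrB -mulr_suml !sum_at; case: j => [[|j] Hj] //=; by rewrite ?mulr0 ?mulr1.
move=> i _; rewrite !mxE mulrBr -mulrA -natrM; congr (_ * _%:R - _ * _%:R).
  case: j => [[|j] Hj] //=; first by rewrite muln0.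
  by rewrite muln1 -val_eqE /= /bump /= eqSS eq_sym.
by rewrite -val_eqE /= eq_sym.
Qed.


Lemma dot_mx m (u v : 'rV[R]_m) : dot u v = (u *m v^T) 0 0.
Proof. by rewrite /dot mxE; apply: eq_bigr => i _; rewrite mxE. Qed.

Lemma adjD n (x : 'rV[R]_n) (b : 'rV[R]_n.+1) : dot x (Dop b) = dot (Dstar x) b.
Proof. by rewrite !dot_mx /Dop /Dstar trmx_mul mulmxA. Qed.

Lemma dotC m (u v : 'rV[R]_m) : dot u v = dot v u.
Proof. by apply: eq_bigr => i _; rewrite mulrC. Qed.

Lemma dotDl m (u v w : 'rV[R]_m) : dot (u + v) w = dot u w + dot v w.
Proof. by rewrite /dot -big_split; apply: eq_bigr => i _; rewrite mxE mulrDl. Qed.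

Lemma dotZl m k (u w : 'rV[R]_m) : dot (k *: u) w = k * dot u w.
Proof. by rewrite /dot mulr_sumr; apply: eq_bigr => i _; rewrite mxE mulrA. Qed.

Lemma dotNl m (u w : 'rV[R]_m) : dot (- u) w = - dot u w.
Proof. by rewrite -scaleN1r dotZl mulN1r. Qed.

Lemma dotDr m (u v w : 'rV[R]_m) : dot w (u + v) = dot w u + dot w v.
Proof. by rewrite dotC dotDl !(dotC w). Qed.

Lemma dotZr m k (u w : 'rV[R]_m) : dot w (k *: u) = k * dot w u.
Proof. by rewrite dotC dotZl dotC. Qed.

Lemma dotNr m (u w : 'rV[R]_m) : dot w (- u) = - dot w u.
Proof. by rewrite dotC dotNl dotC. Qed.

Lemma dot0l m (w : 'rV[R]_m) : dot 0 w = 0.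
Proof. by rewrite /dot big1 // => i _; rewrite mxE mul0r. Qed.

Lemma dot_ge0 m (u : 'rV[R]_m) : 0 <= dot u u.
Proof. by apply: sumr_ge0 => i _; rewrite -expr2 sqr_ge0. Qed.

Lemma norm1_ge0 m (u : 'rV[R]_m) : 0 <= norm1 u.
Proof. by apply: sumr_ge0 => i _. Qed.

Lemma norminf_ge0 m (u : 'rV[R]_m) : 0 <= norminf u.
Proof. by rewrite /norminf bigmax_ge_id. Qed.

Lemma le_norminf m (u : 'rV[R]_m) i : `|u 0 i| <= norminf u.
Proof. exact: le_bigmax. Qed.

Lemma norminf_le m (u : 'rV[R]_m) M : 0 <= M -> (forall i, `|u 0 i| <= M) -> norminf u <= M.
Proof. by move=> H0 H; apply: bigmax_le. Qed.

Lemma holder m (u v : 'rV[R]_m) : dot u v <= norm1 u * norminf v.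
Proof.
rewrite /dot /norm1 mulr_suml; apply: ler_sum => i _.
apply: le_trans (ler_norm _) _; rewrite normrM ler_wpM2l //; exact: le_norminf.
Qed.

Lemma norm1D m (u v : 'rV[R]_m) : norm1 (u + v) <= norm1 u + norm1 v.
Proof. by rewrite /norm1 -big_split; apply: ler_sum => i _; rewrite mxE ler_normD. Qed.

Lemma norm1Z m k (u : 'rV[R]_m) : norm1 (k *: u) = `|k| * norm1 u.
Proof. by rewrite /norm1 mulr_sumr; apply: eq_bigr => i _; rewrite mxE normrM. Qed.

Lemma norm1_eq0 m (u : 'rV[R]_m) : norm1 u = 0 -> u = 0.
Proof.
move=> /eqP; rewrite psumr_eq0 // => /allP H; apply/rowP => i; rewrite mxE.
by apply/eqP; rewrite -normr_eq0; apply: H; rewrite mem_index_enum.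
Qed.

Lemma norminfZ m k (u : 'rV[R]_m) : norminf (k *: u) <= `|k| * norminf u.
Proof.
apply: norminf_le => [|i]; first by rewrite mulr_ge0 // norminf_ge0.
by rewrite mxE normrM ler_wpM2l // le_norminf.
Qed.

Lemma norminfD m (u v : 'rV[R]_m) : norminf (u + v) <= norminf u + norminf v.
Proof.
apply: norminf_le => [|i]; first by rewrite addr_ge0 // norminf_ge0.
by rewrite mxE (le_trans (ler_normD _ _)) // lerD // le_norminf.
Qed.

Lemma norminf_eq0 m (u : 'rV[R]_m) : norminf u = 0 -> u = 0.
Proof.
move=> H; apply/rowP => i; rewrite mxE; apply/eqP; rewrite -normr_eq0 eq_le normr_ge0 andbT.
by rewrite -H le_norminf.
Qed.

Lemma norminf0 m : norminf (0 : 'rV[R]_m) = 0.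
Proof. apply: le_anti; rewrite norminf_ge0 andbT; apply: norminf_le => // i; by rewrite mxE normr0. Qed.

Definition delta m (p : 'I_m) : 'rV[R]_m := \row_l ((l == p)%:R).

Lemma dot_delta m (p : 'I_m) v : dot (delta p) v = v 0 p.
Proof.
rewrite /dot (bigD1 p) //= big1 ?addr0; first by rewrite mxE eqxx mul1r.
by move=> i /negbTE Hi; rewrite mxE Hi mul0r.
Qed.

Lemma norm1_delta m (p : 'I_m) : norm1 (delta p) = 1.
Proof.
rewrite /norm1 (bigD1 p) //= big1 ?addr0; first by rewrite mxE eqxx normr1.
by move=> i /negbTE Hi; rewrite mxE Hi normr0.
Qed.


Lemma at_row m (f : nat -> R) k : at_ (\row_(i < m) f i) k = if (k < m)%N then f k else 0.
Proof.
case: ltnP => H; last by rewrite at_ge.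
by rewrite -[k]/(nat_of_ord (Ordinal H)) atE mxE.
Qed.

Lemma Dop_ker n (w : 'rV[R]_n.+1) : Dop w = 0 -> forall j, w 0 j = w 0 0.
Proof.
move=> H.
have K : forall k, (k <= n)%N -> at_ w k = at_ w 0.
  elim=> // k IH Hk.
  have Hk' : (k < n)%N by [].
  have := congr1 (fun M : 'rV[R]_n => M 0 (Ordinal Hk')) H; rewrite Dop_entry mxE /= => E.
  by rewrite -IH ?(ltnW Hk) //; apply/eqP; rewrite -subr_eq0 E.
move=> j; rewrite -!atE -(K j) //; rewrite -ltnS; exact: ltn_ord.
Qed.

Lemma Dstar_inj n (x : 'rV[R]_n) : Dstar x = 0 -> x = 0.
Proof.
move=> H.
have K : forall k, at_ x k = 0.
  elim=> [|k IH].
    case: n x H => [|n] x H; first by rewrite at_ge.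
    have := congr1 (fun M : 'rV[R]_(n.+2) => M 0 (@ord0 n.+1)) H; rewrite Dstar_entry mxE /= => E.
    by apply/eqP; rewrite -oppr_eq0 -(add0r (- _)) E.
  case: (ltnP k.+1 n.+1) => Hk; last by rewrite at_ge // leqW.
  have := congr1 (fun M : 'rV[R]_(n.+1) => M 0 (Ordinal Hk)) H; rewrite Dstar_entry mxE /= IH => E.
  by apply/eqP; rewrite -oppr_eq0 -(add0r (- _)) E.
by apply/rowP => i; rewrite -atE K mxE.
Qed.

Definition pre n (a : 'rV[R]_n) : 'rV[R]_n.+1 := \row_(j < n.+1) \sum_(i < n | (i < j)%N) a 0 i.

Lemma Dop_pre n (a : 'rV[R]_n) : Dop (pre a) = a.
Proof.
apply/rowP => i; rewrite Dop_entry /pre !(at_row n.+1 (fun k => \sum_(i < n | (i < k)%N) a 0 i)).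
rewrite ltnS ltn_ord ltnW //.
rewrite (bigD1 i) //= (eq_bigl (fun l : 'I_n => (l < i)%N)) ?addrK // => l.
by rewrite ltnS ltn_neqAle andbC.
by rewrite ltnS ltn_ord. Qed.

Lemma natr_leS (x l : nat) : ((x <= l.+1)%N%:R : R) = (x <= l)%N%:R + (x == l.+1)%:R.
Proof.
have [H|H|->] := ssrnat.ltngtP x l.+1.
- by rewrite -ltnS H addr0.
- by rewrite leqNgt (ltn_trans _ H) // addr0.
- by rewrite ltnn add0r.
Qed.

Lemma natr_le0 (x : nat) : ((x <= 0)%N%:R : R) = (0%N == x)%:R.
Proof. by case: x. Qed.

Lemma Dstar_surj n (j k : 'I_n.+1) : exists e : 'rV[R]_n, Dstar e = delta k - delta j.
Proof.
exists (\row_(i < n) ((j <= i)%N%:R - (k <= i)%N%:R)).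
apply/rowP => l; rewrite Dstar_entry !mxE.
case: l => [[|l] Hl]; rewrite /pv !(at_row n (fun i => (j <= i)%N%:R - (k <= i)%N%:R)) -!val_eqE /=.
  case: n j k Hl => [|n] j k Hl.
    by rewrite ltnn (ord1 j) (ord1 k) /= !subrr.
  have H0 : (0 < n.+1)%N by []. rewrite H0.
  rewrite !natr_le0; lra.
have Hl2 : (l < n)%N by []. rewrite (at_row n (fun i => (j <= i)%N%:R - (k <= i)%N%:R)) Hl2.
case: ltnP => Hln.
  by rewrite !natr_leS ![(_ == l.+1)]eq_sym; lra.
have Hj : (j <= l.+1)%N by have := ltn_ord j; lia.
have Hk : (k <= l.+1)%N by have := ltn_ord k; lia.
move: (natr_leS j l) (natr_leS k l); rewrite Hj Hk ![(_ == l.+1)]eq_sym => Ej Ek; lra.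
Qed.

End Basics.


Section S2.
Variable R : rcfType.

Lemma ex_argmax m (f : 'I_m.+1 -> R) : exists i, forall j, f j <= f i.
Proof. by case: (@arg_maxP _ R _ ord0 xpredT f isT) => i _ H; exists i => j; apply: H. Qed.

Lemma ex_argmin m (f : 'I_m.+1 -> R) : exists i, forall j, f i <= f j.
Proof. by case: (@arg_minP _ R _ ord0 xpredT f isT) => i _ H; exists i => j; apply: H. Qed.



Lemma at_shift m (b : 'rV[R]_m) t k : (k < m)%N -> at_ (\row_j (b 0 j + t)) k = at_ b k + t.
Proof. move=> H. rewrite -[k]/(nat_of_ord (Ordinal H)) !atE mxE. reflexivity. Qed.

Lemma Dop_shift n (b : 'rV[R]_n.+1) t : Dop (\row_j (b 0 j + t)) = Dop b.
Proof.
apply/rowP => i; rewrite !Dop_entry.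
rewrite !at_shift ?ltnS ?(ltnW (ltn_ord i)) ?ltn_ord //; ring.
Qed.

Lemma DopB n (b c : 'rV[R]_n.+1) : Dop (b - c) = Dop b - Dop c.
Proof. by rewrite /Dop mulmxBl. Qed.

Lemma DopZ n k (b : 'rV[R]_n.+1) : Dop (k *: b) = k *: Dop b.
Proof. by rewrite /Dop scalemxAl. Qed.

Lemma DopD n (b c : 'rV[R]_n.+1) : Dop (b + c) = Dop b + Dop c.
Proof. by rewrite /Dop mulmxDl. Qed.

Lemma DstarD n (b c : 'rV[R]_n) : Dstar (b + c) = Dstar b + Dstar c.
Proof. by rewrite /Dstar mulmxDl. Qed.

Lemma DstarZ n k (b : 'rV[R]_n) : Dstar (k *: b) = k *: Dstar b.
Proof. by rewrite /Dstar scalemxAl. Qed.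

Lemma DstarB n (b c : 'rV[R]_n) : Dstar (b - c) = Dstar b - Dstar c.
Proof. by rewrite /Dstar mulmxBl. Qed.

Lemma normY_struct n (a : 'rV[R]_n) : exists (be : 'rV[R]_n.+1) (M : R),
  [/\ Dop be = a, norminf be = M, (forall j, `|be 0 j| <= M),
      (exists j, be 0 j = M) /\ (exists j, be 0 j = - M) &
      forall b, Dop b = a -> M <= norminf b].
Proof.
pose b0 := pre a.
have [jM HM] := ex_argmax (fun j => b0 0 j).
have [jm Hm] := ex_argmin (fun j => b0 0 j).
pose mid := (b0 0 jM + b0 0 jm) / 2.
pose M := (b0 0 jM - b0 0 jm) / 2.
pose be := \row_j (b0 0 j + - mid).
have Dbe : Dop be = a by rewrite /be Dop_shift Dop_pre.
have bnd : forall j, `|be 0 j| <= M.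
  move=> j; rewrite mxE ler_norml; have := HM j; have := Hm j; rewrite /M /mid => /= h1 h2.
  apply/andP; split; lra.
have eM : be 0 jM = M by rewrite mxE /M /mid; field.
have em : be 0 jm = - M by rewrite mxE /M /mid; field.
have M0 : 0 <= M by apply: le_trans (bnd jM); exact: normr_ge0.
clearbody be.
exists be, M; split => //.
- apply: le_anti; rewrite norminf_le //=; apply: le_trans (le_norminf be jM); by rewrite eM ger0_norm.
- by split; [exists jM | exists jm].
move=> b Db.
have K : Dop (b - be) = 0 by rewrite DopB Db Dbe subrr.
have := Dop_ker K jM; have := Dop_ker K jm; rewrite !mxE eM em.
move: (b 0 0 - be 0 0) => t E1 E2.
have h1 := le_norminf b jM; have h2 := le_norminf b jm.
have e1 : b 0 jM = M + t by rewrite -E2; ring.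
have e2 : b 0 jm = - M + t by rewrite -E1; ring.
rewrite e1 in h1; rewrite e2 in h2.
case: (lerP 0 t) => Ht.
  apply: le_trans h1; apply: le_trans (ler_norm _); lra.
apply: le_trans h2; rewrite ler_normr; apply/orP; right; lra.
Qed.

End S2.


Section S3.
Variable R : rcfType.
Variable n : nat.
Variable nY : 'rV[R]_n -> R.
Hypothesis HY : forall a, is_normY a (nY a).

Lemma nY_le a b : Dop b = a -> nY a <= norminf b.
Proof. by case: (HY a) => _ H; apply: H. Qed.

Lemma nY_opt a : exists b, Dop b = a /\ norminf b = nY a.
Proof. by case: (HY a). Qed.

Lemma nY_ge0 a : 0 <= nY a.
Proof. by have [b [_ <-]] := nY_opt a; exact: norminf_ge0. Qed.

Lemma nY_struct a : exists (be : 'rV[R]_n.+1),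
  [/\ Dop be = a, norminf be = nY a, (forall j, `|be 0 j| <= nY a),
      (exists j, be 0 j = nY a) & (exists j, be 0 j = - nY a)].
Proof.
have [be [M [Db Nb bnd [e1 e2] low]]] := normY_struct a.
have EM : nY a = M.
  apply: le_anti; rewrite -{1}Nb nY_le //=.
  by have [b [Db' <-]] := nY_opt a; apply: low.
by exists be; rewrite EM.
Qed.

Lemma Dop0 : Dop (0 : 'rV[R]_n.+1) = 0.
Proof. by rewrite /Dop mul0mx. Qed.

Lemma nY0 : nY 0 = 0.
Proof. by apply: le_anti; rewrite nY_ge0 andbT -(norminf0 R n.+1) nY_le // Dop0. Qed.

Lemma nYZle k a : nY (k *: a) <= `|k| * nY a.
Proof.
have [b [<- Nb]] := nY_opt a.
apply: le_trans (nY_le (DopZ k b)) _; rewrite -Nb; exact: norminfZ.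
Qed.

Lemma nY_norm : is_norm nY.
Proof.
split.
- move=> x H; have [b [Db Nb]] := nY_opt x; rewrite H in Nb.
  by rewrite -Db (norminf_eq0 Nb) Dop0.
- move=> k x; have [->|k0] := eqVneq k 0.
    by rewrite scale0r nY0 normr0 mul0r.
  apply: le_anti; rewrite nYZle /=.
  have := nYZle k^-1 (k *: x); rewrite scalerA mulVf // scale1r normfV => H.
  by rewrite -ler_pdivlMl ?normr_gt0 // mulrC.
- move=> x y; have [b [<- Nb]] := nY_opt x; have [c [<- Nc]] := nY_opt y.
  apply: le_trans (nY_le (DopD b c)) _; rewrite -Nb -Nc; exact: norminfD.
Qed.

Lemma normX_norm : is_norm (@normX R n).
Proof.
split.
- by move=> x /norm1_eq0 /Dstar_inj.
- by move=> k x; rewrite /normX DstarZ norm1Z.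
- by move=> x y; rewrite /normX DstarD norm1D.
Qed.

Lemma norm1B m (u v : 'rV[R]_m) : norm1 (u - v) <= norm1 u + norm1 v.
Proof. by apply: le_trans (norm1D _ _) _; rewrite -scaleN1r norm1Z normrN1 mul1r. Qed.

Lemma dual_XY : is_dual (@normX R n) nY.
Proof.
move=> y; split.
  move=> z [x [Hx ->]].
  have [b [Db Nb]] := nY_opt y.
  rewrite -{1}Db adjD; apply: le_trans (holder _ _) _.
  by rewrite Nb; apply: ler_piMl (nY_ge0 _) Hx.
move=> u Hu.
have [be [Db Nb bnd [jM eM] [jm em]]] := nY_struct y.
have [e De] := Dstar_surj R jm jM.
apply: Hu; exists (2^-1 *: e); split.
  rewrite /normX DstarZ norm1Z De; apply: le_trans (ler_wpM2l _ (norm1B _ _)) _ => //.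
  by rewrite !norm1_delta ger0_norm ?invr_ge0 //; lra.
rewrite dotZl -[X in dot _ X]Db adjD De dotDl dotNl !dot_delta eM em; lra.
Qed.

Lemma dual_YX : is_dual nY (@normX R n).
Proof.
move=> y; split.
  move=> z [x [Hx ->]].
  have [b [Db Nb]] := nY_opt x.
  rewrite dotC -Db adjD; apply: le_trans (holder _ _) _.
  by rewrite Nb; apply: ler_piMr (norm1_ge0 _) Hx.
move=> u Hu; apply: Hu.
pose b := \row_j Num.sg ((Dstar y) 0 j).
exists (Dop b); split.
  apply: le_trans (nY_le (erefl _)) _; apply: norminf_le => // j.
  by rewrite mxE normr_sg; case: (_ != 0).
rewrite dotC adjD /dot /normX /norm1; apply: eq_bigr => j _.
by rewrite /b [X in _ * X]mxE normrEsg mulrC.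
Qed.

End S3.


Section S4.
Variable R : rcfType.

Lemma last_ext (E : nat -> bool) N : (exists k, (k <= N)%N /\ E k) ->
  exists p, [/\ (p <= N)%N, E p & forall q, (p < q)%N -> (q <= N)%N -> ~~ E q].
Proof.
elim: N => [|N IH] [k [Hk Ek]].
  exists 0%N; split => //; first by move: Hk Ek; rewrite leqn0 => /eqP ->.
  by move=> q Hq Hq'; move: Hq Hq'; lia.
case EN: (E N.+1).
  by exists N.+1; split => // q Hq Hq'; move: Hq Hq'; lia.
have Hk' : (k <= N)%N.
  move: Hk; rewrite leq_eqVlt => /orP [/eqP Ek'|//]; by rewrite Ek' EN in Ek.
have [p [Hp Ep Hq]] := IH (ex_intro _ k (conj Hk' Ek)).
exists p; split => //; first by apply: leqW.
move=> q Hpq HqN; move: HqN; rewrite leq_eqVlt => /orP [/eqP ->|HqN]; first by rewrite EN.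
by apply: Hq.
Qed.

Definition kap (w : nat -> R) N k :=
  (if k is k'.+1 then w k - w k' else 0) - (if (k < N)%N then w k.+1 - w k else 0).

Lemma harm (E : nat -> bool) (s : nat -> R) N :
  (forall k, (k <= N)%N -> E k -> s k = 1 \/ s k = -1) ->
  (exists k, (k <= N)%N /\ E k) ->
  exists w : nat -> R,
   [/\ forall k, (k <= N)%N -> `|w k| <= 1,
       forall k, (k <= N)%N -> E k -> w k = s k &
       forall k, (k <= N)%N -> ~~ E k -> kap w N k = 0].
Proof.
elim: N => [|N IH] Hs Hex.
  have E0 : E 0%N by case: Hex => k [Hk Ek]; move: Hk Ek; rewrite leqn0 => /eqP ->.
  exists (fun _ => s 0%N); split.
  - by move=> k _; case: (Hs 0%N) => // ->; rewrite ?normrN normr1.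
  - by move=> k; rewrite leqn0 => /eqP ->.
  - by move=> k; rewrite leqn0 => /eqP ->; rewrite E0.
have Hs1 : forall k, (k <= N)%N -> E k -> s k = 1 \/ s k = -1.
  by move=> k Hk; apply: Hs; apply: leqW.
have Hsn : forall k, (k <= N.+1)%N -> E k -> `|s k| <= 1.
  by move=> k Hk Ek; case: (Hs k Hk Ek) => ->; rewrite ?normrN normr1.
case: (boolP [exists k : 'I_N.+1, E k]) => [/existsP [k0 Ek0] | /existsPn Hno].
  have Hex1 : exists k, (k <= N)%N /\ E k by exists k0; split => //; rewrite -ltnS.
  have [w [Hw1 Hw2 Hw3]] := IH Hs1 Hex1.
  case EN: (E N.+1).
  -
    have [p [Hp Ep Hlast]] := last_ext Hex1.
    pose lin (k : nat) := s p + (s N.+1 - s p) * ((k%:R - p%:R) / (N.+1%:R - p%:R)).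
    have den : (0 : R) < N.+1%:R - p%:R by rewrite subr_gt0 ltr_nat ltnS.
    have linp : lin p = s p by rewrite /lin subrr mul0r mulr0 addr0.
    have linN : lin N.+1 = s N.+1 by rewrite /lin divff ?mulr1 ?(gt_eqF den) //; ring.
    have linb : forall k, (p <= k)%N -> (k <= N.+1)%N -> `|lin k| <= 1.
      move=> k H1 H2.
      have t0 : 0 <= (k%:R - p%:R) / (N.+1%:R - p%:R) :> R.
        by rewrite divr_ge0 ?(ltW den) // subr_ge0 ler_nat.
      have t1 : (k%:R - p%:R) / (N.+1%:R - p%:R) <= 1 :> R.
        by rewrite ler_pdivrMr // mul1r lerB // ler_nat.
      move: t0 t1; rewrite /lin; move: ((k%:R - p%:R) / (N.+1%:R - p%:R)) => t t0 t1.
      rewrite ler_norml; case: (Hs p (leqW Hp) Ep) => ->; case: (Hs N.+1 (leqnn _) EN) => ->;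
        apply/andP; split; lra.
    exists (fun k => if (k <= p)%N then w k else lin k).
    have Wl : forall k, (p <= k)%N -> (if (k <= p)%N then w k else lin k) = lin k.
      move=> k Hk; case: ifP => // Hkp.
      have -> : k = p by apply/anti_leq; rewrite Hk Hkp.
      by rewrite linp Hw2.
    split.
    + move=> k Hk; case: ifP => Hkp; first by apply: Hw1; apply: leq_trans Hkp Hp.
      by apply: linb => //; move: Hkp; lia.
    + move=> k Hk Ek; case: ifP => Hkp; first by apply: Hw2 => //; apply: leq_trans Hkp Hp.
      have : k = N.+1.
        case: (ltnP N k) => HNk; first by move: Hk HNk; lia.
        have Hpk : (p < k)%N by rewrite ltnNge Hkp.
        by have := Hlast k Hpk HNk; rewrite Ek.
      by move=> ->; rewrite linN.
    + move=> k Hk nEk.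
      have HkN : (k <= N)%N by move: Hk; rewrite leq_eqVlt => /orP [/eqP E1|]; [rewrite E1 EN in nEk | ].
      have Hkp : k != p by apply: contraNneq nEk => ->.
      case: (ltnP k p) => Hkp2.
        have := Hw3 k HkN nEk; rewrite /kap.
        rewrite (leq_trans (ltnW Hkp2)) ?leqnn // Hkp2 (leq_trans Hkp2 Hp).
        case: k Hk HkN nEk Hkp Hkp2 => [|k] //= Hk HkN nEk Hkp Hkp2.
        have h1 : (k <= p)%N by lia.
        have h2 : (k.+1 < N.+1)%N by lia.
        by rewrite h1 h2.
      have Hpk : (p < k)%N by rewrite ltn_neqAle eq_sym Hkp Hkp2.
      rewrite /kap ltnS HkN.
      case: k Hk HkN nEk Hkp Hkp2 Hpk => [|k] // Hk HkN nEk Hkp Hkp2 Hpk.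
      rewrite !Wl //; last by lia.
      move: den; rewrite /lin; move: (N.+1%:R - p%:R) => D den.
      rewrite -!natr1; field; by rewrite gt_eqF.
  -
    exists (fun k => if (k <= N)%N then w k else w N).
    split.
    + by move=> k Hk; case: ifP => H; apply: Hw1.
    + move=> k Hk Ek; case: ifP => H; first by apply: Hw2.
      have : k = N.+1 by move: Hk H; lia.
      by move=> E1; rewrite E1 EN in Ek.
    + move=> k Hk nEk.
      have W1 : forall j, (j <= N)%N -> (if (j <= N)%N then w j else w N) = w j by move=> j ->.
      rewrite /kap; cbv beta.
      move: Hk; rewrite leq_eqVlt => /orP [/eqP ->|HkN].
        by rewrite !ltnn (W1 N (leqnn N)) subrr subr0.
      rewrite ltnS in HkN.
      have := Hw3 k HkN nEk; rewrite /kap (ltnS k N) HkN.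
      case: (ltnP k N) => HkN2.
        case: k HkN HkN2 {nEk} => [|k] HkN HkN2 //.
        by rewrite (W1 _ (ltnW HkN)).
      have Ek : k = N by apply/anti_leq; rewrite HkN HkN2.
      subst k; rewrite subrr subr0.
      case: N {IH Hs Hs1 Hsn Hex Hex1 Hw1 Hw2 Hw3 EN k0 Ek0 nEk W1 HkN HkN2} => [|N]; [by rewrite subr0 | by rewrite leqnSn subr0].
have EN : E N.+1.
  case: Hex => k [Hk Ek]; move: Hk; rewrite leq_eqVlt => /orP [/eqP <- //|Hk].
  by have := Hno (Ordinal Hk); rewrite Ek.
exists (fun _ => s N.+1); split.
- by move=> k _; apply: Hsn.
- move=> k Hk Ek; move: Hk; rewrite leq_eqVlt => /orP [/eqP -> //|Hk].
  by have := Hno (Ordinal Hk); rewrite Ek.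
- by move=> k _ _; rewrite /kap !subrr; case: k => [|k]; case: (_ < _)%N; rewrite ?subrr ?subr0.
Qed.

End S4.


Section S5.
Variable R : rcfType.

Lemma norm1_pert m (u : 'rV[R]_m) (j k : 'I_m) t : 0 < t -> t <= u 0 j ->
  norm1 (u + t *: (delta R k - delta R j)) <= norm1 u.
Proof.
move=> t0 tu.
have E1 : norm1 (u - t *: delta R j) + t = norm1 u.
  rewrite /norm1 (bigD1 j) //= [X in _ = X](bigD1 j) //= !mxE eqxx mulr1.
  rewrite (eq_bigr (fun l => `|u 0 l|)); last first.
    by move=> l /negbTE Hl; rewrite !mxE Hl mulr0 subr0.
  rewrite (ger0_norm (_ : 0 <= u 0 j - t)) ?subr_ge0 // ger0_norm; last by apply: le_trans tu; exact: ltW.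
  ring.
have -> : u + t *: (delta R k - delta R j) = (u - t *: delta R j) + t *: delta R k.
  by apply/rowP => l; rewrite !mxE; ring.
apply: le_trans (norm1D _ _) _; rewrite norm1Z norm1_delta mulr1 gtr0_norm //.
lra.
Qed.

Lemma dot_sq m (b e : 'rV[R]_m) t :
  dot (b - t *: e) (b - t *: e) = dot b b - 2 * t * dot b e + t ^+ 2 * dot e e.
Proof.
rewrite !dotDl !dotDr !dotNl !dotNr !dotZl !dotZr (dotC e b); ring.
Qed.

Lemma norm2N m (x : 'rV[R]_m) : norm2 (- x) = norm2 x.
Proof. by rewrite /norm2 dotNl dotNr opprK. Qed.

Lemma normXN n (x : 'rV[R]_n) : normX (- x) = normX x.
Proof. by rewrite /normX -scaleN1r DstarZ norm1Z normrN1 mul1r. Qed.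

Lemma decompN n (c a b : 'rV[R]_n) : is_decomp (@normX R n) (@norm2 R n) c a b ->
  is_decomp (@normX R n) (@norm2 R n) (- c) (- a) (- b).
Proof.
move=> [Hc Hp]; split; first by rewrite Hc opprD.
move=> a' b' Hc'.
have := Hp (- a') (- b'); rewrite !normXN !norm2N; apply.
by rewrite -opprD -Hc' opprK.
Qed.

Lemma Qpos n (c a b : 'rV[R]_n) (be : 'rV[R]_n.+1) :
  is_decomp (@normX R n) (@norm2 R n) c a b -> Dop be = b ->
  forall j, 0 < (Dstar a) 0 j -> forall k, be 0 k <= be 0 j.
Proof.
move=> [Hc Hp] Db j Hj k; rewrite leNgt; apply/negP => Hlt.
have [e De] := Dstar_surj R j k.
pose g := dot e b.
have Hg : g = be 0 k - be 0 j.
  by rewrite /g -Db adjD De dotDl dotNl !dot_delta.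
have g0 : 0 < g by rewrite Hg subr_gt0.
pose ee := dot e e.
have ee0 : 0 <= ee := dot_ge0 e.
pose t := Num.min ((Dstar a) 0 j) (g / (ee + 1)).
have t0 : 0 < t by rewrite lt_min Hj divr_gt0 // ltr_wpDl.
have tu : t <= (Dstar a) 0 j by rewrite ge_min lexx.
have tg : t <= g / (ee + 1) by rewrite ge_min lexx orbT.
have tee : t * ee <= g.
  apply: le_trans (_ : g / (ee + 1) * (ee + 1) <= g).
    apply: le_trans (_ : g / (ee + 1) * ee <= _).
      by rewrite ler_wpM2r.
    by rewrite ler_wpM2l ?lerDl // divr_ge0 // ?ltW // ltr_wpDl.
  by rewrite divfK // gt_eqF // ltr_wpDl.
have HX : normX (a + t *: e) <= normX a.
  by rewrite /normX DstarD DstarZ De norm1_pert.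
have H2 : norm2 (b - t *: e) < norm2 b.
  have h1 : t ^+ 2 * ee <= t * g by rewrite expr2 -mulrA ler_wpM2l // ltW.
  have h2 : 0 < t * g by rewrite mulr_gt0.
  have h3 : dot (b - t *: e) (b - t *: e) < dot b b.
    rewrite dot_sq (dotC b e) -/g -/ee; lra.
  rewrite /norm2 ltr_sqrt //; apply: le_lt_trans (dot_ge0 (b - t *: e)) h3.
have := Hp (a + t *: e) (b - t *: e).
rewrite Hc addrACA subrr addr0 => /(_ erefl) [H|[H|[H1 H2']]].
- by move: (lt_le_trans H HX); rewrite ltxx.
- by move: (lt_trans H H2); rewrite ltxx.
- by move: H2; rewrite H2' ltxx.
Qed.

Lemma Qneg n (c a b : 'rV[R]_n) (be : 'rV[R]_n.+1) :
  is_decomp (@normX R n) (@norm2 R n) c a b -> Dop be = b ->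
  forall j, (Dstar a) 0 j < 0 -> forall k, be 0 j <= be 0 k.
Proof.
move=> Hd Db j Hj k.
have Db' : Dop (- be) = - b by rewrite -Db /Dop mulNmx.
have := Qpos (decompN Hd) Db' (j := j); rewrite /Dstar mulNmx mxE oppr_gt0 => /(_ Hj k).
by rewrite !mxE lerN2.
Qed.

End S5.


Section S6.
Variable R : rcfType.
Variable n : nat.
Variable nY : 'rV[R]_n -> R.
Hypothesis HY : forall a, is_normY a (nY a).

Lemma at_Dop_row (w : nat -> R) i :
  at_ (Dop (\row_(j < n.+1) w j)) i = if (i < n)%N then w i.+1 - w i else 0.
Proof.
case: ltnP => H; last by rewrite at_ge.
rewrite -[i]/(nat_of_ord (Ordinal H)) atE Dop_entry !(at_row n.+1 w) /=.
have h1 : (i.+1 < n.+1)%N by []. have h2 : (i < n.+1)%N by apply: ltnW.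
by rewrite h1 h2.
Qed.

Lemma kapE (w : nat -> R) (j : 'I_n.+1) :
  (Dstar (Dop (\row_(j < n.+1) w j))) 0 j = kap w n j.
Proof.
rewrite Dstar_entry /pv !at_Dop_row /kap.
case: j => [[|j] Hj] //=.
by rewrite at_Dop_row -ltnS Hj.
Qed.

Lemma kap_pos (w : nat -> R) N k : (k <= N)%N -> (forall i, (i <= N)%N -> `|w i| <= 1) ->
  w k = 1 -> 0 <= kap w N k.
Proof.
move=> Hk Hb wk; rewrite /kap.
have B : forall i, (i <= N)%N -> -1 <= w i <= 1 by move=> i Hi; rewrite -ler_norml Hb.
case: k Hk wk => [|k] Hk wk.
  case: ifP => h; last lra.
  by have /andP [h1 h2] := B 1%N h; lra.
have /andP [h1 h2] := B k (ltnW Hk).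
case: ifP => h; last lra.
by have /andP [h3 h4] := B k.+2 h; lra.
Qed.

Lemma kap_neg (w : nat -> R) N k : (k <= N)%N -> (forall i, (i <= N)%N -> `|w i| <= 1) ->
  w k = -1 -> kap w N k <= 0.
Proof.
move=> Hk Hb wk; rewrite /kap.
have B : forall i, (i <= N)%N -> -1 <= w i <= 1 by move=> i Hi; rewrite -ler_norml Hb.
case: k Hk wk => [|k] Hk wk.
  case: ifP => h; last lra.
  by have /andP [h1 h2] := B 1%N h; lra.
have /andP [h1 h2] := B k (ltnW Hk).
case: ifP => h; last lra.
by have /andP [h3 h4] := B k.+2 h; lra.
Qed.

Lemma tight_all c : tight (@normX R n) nY c.
Proof.
move=> a b Hd; have [Hc Hp] := Hd; split => // a' b' Hc'.
have [Xn Xh Xt] := normX_norm R n.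
have [Yn Yh Yt] := nY_norm HY.
case: (eqVneq b 0) => [b0|bn0].
  rewrite b0 (nY0 HY).
  case: (ltrP 0 (nY b')) => Hb'; first by right; left.
  have Eb' : b' = 0 by apply: Yn; apply: le_anti; rewrite Hb' nY_ge0.
  have Ea' : a' = a by move: Hc'; rewrite Hc b0 Eb' !addr0.
  by right; right; rewrite Ea' Eb' (nY0 HY).
have [be [Db Nb bnd [jM eM] [jm em]]] := nY_struct HY b.
set M := nY b in Nb bnd eM em *.
have M0 : 0 < M.
  rewrite lt_def (nY_ge0 HY b) andbT; apply/eqP => H; move: bn0; by rewrite (Yn _ H) eqxx.
have Hpos : forall j, 0 < (Dstar a) 0 j -> be 0 j = M.
  move=> j Hj; have := Qpos Hd Db Hj jM; rewrite eM => h.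
  by apply: le_anti; rewrite h andbT (le_trans (ler_norm _) (bnd j)).
have Hneg : forall j, (Dstar a) 0 j < 0 -> be 0 j = - M.
  move=> j Hj; have := Qneg Hd Db Hj jm; rewrite em => h.
  apply: le_anti; rewrite h /=; have := bnd j; rewrite ler_norml => /andP [].
  by rewrite lerNl.
pose E (k : nat) := (k <= n)%N && (`|at_ be k| == M).
pose s (k : nat) : R := if at_ be k == M then 1 else -1.
have [w [Hw1 Hw2 Hw3]] : exists w : nat -> R,
   [/\ forall k, (k <= n)%N -> `|w k| <= 1,
       forall k, (k <= n)%N -> E k -> w k = s k &
       forall k, (k <= n)%N -> ~~ E k -> kap w n k = 0].
  apply: harm.
    by move=> k _ _; rewrite /s; case: ifP; [left | right].
  exists jM; split; first by rewrite -ltnS.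
  by rewrite /E -ltnS ltn_ord atE eM ger0_norm ?eqxx // ltW.
pose wv := \row_(j < n.+1) w j.
have W1 : forall j : 'I_n.+1, `|wv 0 j| <= 1.
  by move=> j; rewrite mxE Hw1 // -ltnS.
have WM : forall j : 'I_n.+1, be 0 j = M -> wv 0 j = 1.
  move=> j Hj; rewrite mxE Hw2.
  - by rewrite /s atE Hj eqxx.
  - by rewrite -ltnS.
  - by rewrite /E -ltnS ltn_ord atE Hj ger0_norm ?eqxx // ltW.
have Mneq : (- M == M) = false.
  apply/negbTE; apply/eqP; clear -M0 => H; lra.
have Wm : forall j : 'I_n.+1, be 0 j = - M -> wv 0 j = -1.
  move=> j Hj; rewrite mxE Hw2.
  - by rewrite /s atE Hj Mneq.
  - by rewrite -ltnS.
  - by rewrite /E -ltnS ltn_ord atE Hj normrN ger0_norm ?eqxx // ltW.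
pose z := Dop wv.
have KB : forall j, (Dstar z) 0 j * be 0 j = M * `|(Dstar z) 0 j|.
  move=> j; rewrite /z kapE.
  have Hj : (j <= n)%N by rewrite -ltnS.
  have [HjM|HjM] := eqVneq (be 0 j) M.
    have w1 : w j = 1 by have := WM j HjM; rewrite mxE.
    have k0 : 0 <= kap w n j by apply: kap_pos.
    by rewrite HjM (ger0_norm k0) mulrC.
  have [Hjm|Hjm] := eqVneq (be 0 j) (- M).
    have w1 : w j = -1 by have := Wm j Hjm; rewrite mxE.
    have k0 : kap w n j <= 0 by apply: kap_neg.
    by rewrite Hjm (ler0_norm k0); ring.
  have nE : ~~ E j.
    rewrite /E Hj /= atE eqr_norml negb_and; apply/orP; left; by rewrite negb_or HjM Hjm.
  by rewrite Hw3 // normr0 mul0r mulr0.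
pose K := normX z.
have K0 : 0 < K.
  rewrite lt_def /K norm1_ge0 andbT; apply/eqP => H.
  have z0 : z = 0 by apply: Xn.
  have := Dop_ker z0 jM; have := Dop_ker z0 jm.
  rewrite (WM _ eM) (Wm _ em) => h1 h2; clear -h1 h2; lra.
have AZ : dot a z = normX a.
  rewrite /z adjD /dot /normX /norm1; apply: eq_bigr => j _.
  case: (ltrgt0P ((Dstar a) 0 j)) => h.
  - by rewrite (WM _ (Hpos _ h)) mulr1.
  - by rewrite (Wm _ (Hneg _ h)) mulrN1.
  - by rewrite h mul0r.
have A'Z : dot a' z <= normX a'.
  rewrite /z adjD; apply: le_trans (holder _ _) _; apply: ler_piMr; first exact: norm1_ge0.
  by apply: norminf_le.
have BZ : dot b z = M * K.
  rewrite dotC -Db adjD /dot /K /normX /norm1 mulr_sumr; apply: eq_bigr => j _; exact: KB.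
have B'Z : dot b' z <= nY b' * K.
  have [b2 [Db2 Nb2]] := nY_opt HY b'.
  rewrite dotC -[X in dot _ X]Db2 adjD; apply: le_trans (holder _ _) _; by rewrite Nb2 mulrC.
have Ineq : normX a + M * K <= normX a' + nY b' * K.
  rewrite -AZ -BZ -dotDl -Hc Hc' dotDl; exact: lerD.
case: (ltrP (normX a) (normX a')) => h1; first by left.
case: (ltrP M (nY b')) => h2; first by right; left.
right; right.
have P0 : 0 <= (M - nY b') * K by rewrite mulr_ge0 ?subr_ge0 // ltW.
have P1 : (M - nY b') * K = 0 by lra.
move: P1 => /eqP; rewrite mulf_eq0 (gt_eqF K0) orbF subr_eq0 => /eqP P1.
split; [lra | by rewrite P1].
Qed.

End S6.

Theorem mainTheorem17 (R : rcfType) (n : nat) :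
  (forall a : 'rV[R]_n, exists y : R, is_normY a y) /\
  (forall nY : 'rV[R]_n -> R, (forall a, is_normY a (nY a)) ->
    [/\ is_norm (@normX R n), is_norm nY,
        is_dual (@normX R n) nY, is_dual nY (@normX R n) &
        forall c : 'rV[R]_n, tight (@normX R n) nY c]).
Proof.
split.
  move=> a; have [be [M [Db Nb _ _ low]]] := normY_struct a.
  by exists M; split => //; exists be.
move=> nY HY; split.
- exact: normX_norm.
- exact: nY_norm HY.
- exact: dual_XY HY.
- exact: dual_YX HY.
- exact: tight_all HY.
Qed.
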